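(* Let $n \ge 2$ be an integer. For each $j \in \{1,\dots,n\}$ let $k_j, p_j, q_j, v_j$ be four distinct prime numbers with $k_j, p_j, q_j > v_j$; let $y_j$ be an integer with $1 \le y_j < v_j$, and let $y_j^{-1}$ denote the integer with $1 \le y_j^{-1} < v_j$ and $y_j \cdot y_j^{-1} \equiv 1 \pmod{v_j}$. Define $$N_j = k_j p_j,\qquad e_j = k_j q_j + y_j^{-1},\qquad d_j = v_j^{k_j} \bmod N_j,$$ and assume that $N_1,\dots,N_n$ are pairwise relatively prime. Let $f_j, t_j, r_j$ be positive integers and define $$N'_j = N_j f_j + d_j t_j,\qquad X=\prod_{l=1}^n N_l,$$ let $A_j$ be an integer with $A_j\cdot \frac{X}{N_j} \equiv 1 \pmod{N_j}$, and set $$AX_j = A_j \cdot \frac{X}{N_j},\qquad e'_j = e_j + N'_j r_j,\qquad S_j = e'_j \cdot AX_j .$$ Let $m_1,\dots,m_n$ be nonnegative integers and let $$C = \Big(\sum_{j=1}^n m_j S_j\Big) \bmod X .$$ Fix $i \in \{1,\dots,n\}$ and suppose that $m_i < v_i$ and $$m_i < \frac{k_i}{y_i^{-1} + v_i\, t_i\, r_i}.$$ Then $$\big((C \bmod k_i)\cdot y_i\big) \bmod v_i = m_i .$$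
   Context: This is the correctness (validation) of the AMOUN multi-recipient encryption scheme: recipient $i$ has private key $(k_i, v_i, y_i)$ and public key $(N_i, e_i, d_i)$; the sender, using the public keys of all $n$ recipients and random integers $f_j,t_j$ (initialization) and random coins $r_j$ (encryption), forms a single ciphertext $C$ encoding the message vector $(m_1,\dots,m_n)$; recipient $i$ decrypts by computing $((C \bmod k_i)\cdot y_i) \bmod v_i$. Here $a \bmod b$ denotes the least nonnegative residue of $a$ modulo $b$. *)

(* Defs.v *)
From HB Require Import structures.
From mathcomp Require Import all_boot all_order all_algebra.
Set Implicit Arguments. Unset Strict Implicit. Unset Printing Implicit Defensive.
Import Order.TTheory GRing.Theory Num.Theory.

Definition amoun_N (k p : nat) : nat := k * p.
Definition amoun_e (k q yinv : nat) : nat := k * q + yinv.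
Definition amoun_d (k p v : nat) : nat := v ^ k %% (k * p).

(* Main.v *)
Require Import Defs.
From HB Require Import structures.
From mathcomp Require Import all_boot all_order all_algebra.
From mathcomp Require Import ring.
Import Order.TTheory GRing.Theory Num.Theory.


Theorem mainTheorem1 (n : nat) (k p q v y yinv f t r : 'I_n -> nat)
    (A : 'I_n -> int) (m : 'I_n -> nat) (i : 'I_n) :
  (2 <= n)%N ->
  (forall j, [/\ prime (k j), prime (p j), prime (q j) & prime (v j)]) ->
  (forall j, uniq [:: k j; p j; q j; v j]) ->
  (forall j, [/\ (v j < k j)%N, (v j < p j)%N & (v j < q j)%N]) ->
  (forall j, (1 <= y j)%N && (y j < v j)%N) ->
  (forall j, (1 <= yinv j)%N && (yinv j < v j)%N) ->
  (forall j, y j * yinv j = 1 %[mod v j]) ->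
  (forall j l, j != l -> coprime (amoun_N (k j) (p j)) (amoun_N (k l) (p l))) ->
  (forall j, [/\ (0 < f j)%N, (0 < t j)%N & (0 < r j)%N]) ->
  let N := fun j => amoun_N (k j) (p j) in
  let e := fun j => amoun_e (k j) (q j) (yinv j) in
  let d := fun j => amoun_d (k j) (p j) (v j) in
  let N' := fun j => N j * f j + d j * t j in
  let X := (\prod_(l < n) N l)%N in
  (forall j, ((A j * (X %/ N j)%N%:Z)%R = 1 %[mod (N j)%:Z])%Z) ->
  let AX := fun j => (A j * (X %/ N j)%N%:Z)%R in
  let e' := fun j => (e j + N' j * r j)%N in
  let S := fun j => ((e' j)%:Z * AX j)%R in
  let C := ((\sum_(j < n) (m j)%:Z * S j)%R %% X%:Z)%Z in
  (m i < v i)%N ->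
  ((m i)%:Q < (k i)%:Q / (yinv i + v i * t i * r i)%N%:Q)%R ->
  (modz (modz C (Posz (k i)) * Posz (y i))%R (Posz (v i)) = Posz (m i)).
Proof.
move=> _ Hpr _ Hlt Hy Hyi Hinv _ Hpos N e d N' X HA AX e' S C Hmv Hmk.
have kpos j : (0 < k j)%N by case: (Hpr j) => /prime_gt0.
have Npos j : (0 < N j)%N.
  by case: (Hpr j) => /prime_gt0 h1 /prime_gt0 h2 _ _; rewrite /N /amoun_N muln_gt0 h1.
have XN j : X = (N j * \prod_(l < n | l != j) N l)%N by rewrite /X (bigD1 j).
have XdivN j : (X %/ N j = \prod_(l < n | l != j) N l)%N by rewrite (XN j) mulKn.
have kN : (k i %| N i)%N by rewrite /N /amoun_N dvdn_mulr.
have kX : (k i %| X)%N by rewrite (XN i) dvdn_mulr.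
have kXj j : j != i -> (k i %| X %/ N j)%N.
  move=> hj; rewrite XdivN (bigD1 i) 1?eq_sym //= dvdn_mulr //.
set T := (\sum_(j < n) (m j)%:Z * S j)%R.
set M := (m i * (yinv i + v i * t i * r i))%N.
have kd : (Posz (k i) %| (Posz (d i) - Posz (v i))%R)%Z.
  have h : (d i = v i %[mod k i])%N.
    rewrite /d /amoun_d modn_dvdm ?dvdn_mulr //.
    by case: (Hpr i) => hk _ _ _; rewrite fermat_little.
  rewrite -eqz_mod_dvd !modz_nat h //.
have kT : (Posz (k i) %| (T - Posz M)%R)%Z.
  rewrite /T (bigD1 i) //=.
  have -> : forall a b c : int, (a + b - c = (a - c) + b)%R by move=> a b c; ring.
  apply: rpredD.
    have He' : (Posz (e' i) - Posz (yinv i + v i * t i * r i) = Posz (k i) * Posz (q i + p i * f i * r i) + (Posz (d i) - Posz (v i)) * Posz (t i * r i))%R.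
      rewrite /e' /e /N' /N /amoun_e /amoun_N !PoszD !PoszM !PoszD !PoszM; ring.
    have -> : ((m i)%:Z * S i - Posz M = (m i)%:Z * ((e' i)%:Z * (AX i - 1) + (Posz (e' i) - Posz (yinv i + v i*t i*r i))))%R.
      by rewrite /S /M PoszM; ring.
    apply: dvdz_mull; apply: rpredD.
      apply: dvdz_mull.
      have := HA i; move/eqP; rewrite eqz_mod_dvd => h; apply: dvdz_trans h; exact: kN.
    rewrite He'; apply: rpredD; apply: dvdz_mulr; [exact: dvdzz | exact: kd].
  apply: rpred_sum => j hj.
  rewrite /S /AX; apply: dvdz_mull; apply: dvdz_mull; apply: dvdz_mull.
  exact: kXj.
have hC : (C - T = -((T %/ X%:Z)%Z * X%:Z))%R.
  have hT := divz_eq T X; rewrite /C -/T; rewrite [in X in (_ - X)%R]hT; ring.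
have kC : (Posz (k i) %| (C - Posz M)%R)%Z.
  have -> : (C - Posz M = (C - T) + (T - Posz M))%R by ring.
  apply: rpredD => //; rewrite hC rpredN; apply: dvdz_mull; exact: kX.
have Mk : (M < k i)%N.
  have s0 : (0 < (yinv i + v i * t i * r i)%N%:Q)%R.
    by rewrite ltr0n addn_gt0; case/andP: (Hyi i) => ->.
  by move: Hmk; rewrite ltr_pdivlMr // -natrM ltr_nat.
have -> : (C %% Posz (k i))%Z = Posz M.
  have : (C == Posz M %[mod Posz (k i)])%Z by rewrite eqz_mod_dvd.
  by move/eqP => ->; rewrite modz_nat modn_small.
rewrite -PoszM modz_nat; congr Posz.
have -> : (M * y i = m i * (y i * yinv i) + v i * (m i * t i * r i * y i))%N.
  by rewrite /M; ring.
rewrite addnC mulnC modnMDl -modnMmr Hinv modnMmr muln1 modn_small //.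
Qed.
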